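(* In a scarce-reserves equilibrium, the aggregate real balance of reserves is strictly decreasing in the nominal interest rate: $\partial r/\partial i<0$, where $$r=\begin{cases}\dfrac{(\sigma_2+\sigma_3)\chi}{1+i_d\chi}L^{-1}(i_\ell)-\dfrac{\sigma_3\bar\delta\chi}{1+i_d\chi} & \text{if } L^{-1}(i_\ell)>\bar\delta,\\[2mm] \dfrac{\sigma_2\chi}{1+i_d\chi}L^{-1}(i_\ell) & \text{if } L^{-1}(i_\ell)\le\bar\delta.\end{cases}$$
   Context: Buyers meet sellers in one of three meeting types with probabilities $\sigma_1,\sigma_2,\sigma_3>0$ ($\sum\sigma_j=1$); type-3 buyers may use unsecured credit up to a limit $\bar\delta\ge0$. DM preferences $u,c$ with $u'>0,u''<0$, $c'>0,c''\ge0$, $u(0)=c(0)=0$, $q^*$ solving $u'(q^* )=c'(q^* )$; bargaining power $\theta\in(0,1]$, payment $v(q)=(1-\theta)u(q)+\theta c(q)$, liquidity premium $\lambda(q)=\theta[u'(q)-c'(q)]/[(1-\theta)u'(q)+\theta c'(q)]$ (strictly decreasing on $[0,q^* )$, $0$ at $q^*$), and $L(z)=\lambda(\min\{q^*,v^{-1}(z)\})$ with strictly decreasing inverse $L^{-1}$. Policy: nominal rate $i\ge0$, interest on reserves $i_r$, reserve requirement $\chi\in(0,1)$, $a=(1-\chi)/\chi$. Bank cost functions $\gamma,\eta$ twice differentiable, $\gamma',\gamma'',\eta',\eta''>0$ on $(0,\infty)$, $\gamma(0)=\gamma'(0)=\eta(0)=\eta'(0)=0$; entry cost $k>0$. Loan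 rate $i_\ell=(1+i)/(1+i_d)-1$. In a scarce-reserves equilibrium, bank-level reserves $\tilde r$ and deposit rate $i_d>0$ solve $\gamma'(\tilde r)\tilde r-\gamma(\tilde r)+\eta'(a\tilde r)a\tilde r-\eta(a\tilde r)=k$ and $i_d=i_r-\gamma'(\tilde r)+\big[\frac{1+i}{1+i_d}-1-\eta'(a\tilde r)\big]a$, each bank lends $a\tilde r$, and aggregate reserves $r$ are given by the displayed formula. *)

(* Defs.v *)
From Stdlib Require Import Reals Lra.
From Coquelicot Require Import Coquelicot.
Open Scope R_scope.

Definition ratio_a (chi : R) : R := (1 - chi) / chi.

Definition loan_rate (i id : R) : R := (1 + i) / (1 + id) - 1.

(* Free-entry condition pinning down bank-level reserves r~ :
   gamma'(r) r - gamma(r) + eta'(a r) a r - eta(a r) = k *)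
Definition entry_eq (gamma dgamma eta deta : R -> R) (k chi rt : R) : Prop :=
  dgamma rt * rt - gamma rt + deta (ratio_a chi * rt) * (ratio_a chi * rt)
    - eta (ratio_a chi * rt) = k.

Definition deposit_eq (dgamma deta : R -> R) (chi ir i rt id : R) : Prop :=
  id = ir - dgamma rt + ((1 + i) / (1 + id) - 1 - deta (ratio_a chi * rt)) * ratio_a chi.

Definition scarce_eq (gamma dgamma eta deta : R -> R) (k chi ir i rt id : R) : Prop :=
  0 <= rt /\ entry_eq gamma dgamma eta deta k chi rt /\
  0 < id /\ deposit_eq dgamma deta chi ir i rt id.

Definition agg_reserves (Linv : R -> R) (s2 s3 chi dbar id il : R) : R :=
  if Rle_dec (Linv il) dbar then
    s2 * chi / (1 + id * chi) * Linv il
  else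
    (s2 + s3) * chi / (1 + id * chi) * Linv il - s3 * dbar * chi / (1 + id * chi).

(* Main.v *)
Require Import Defs.
From Stdlib Require Import Reals Lra.
From Coquelicot Require Import Coquelicot.
Open Scope R_scope.

Lemma h_incr (a : R) (gamma dgamma ddgamma eta deta ddeta : R -> R)
  (Ha : 0 < a)
  (Hg1 : forall x, is_derive gamma x (dgamma x))
  (Hg2 : forall x, is_derive dgamma x (ddgamma x))
  (Hgpos : forall x, 0 < x -> 0 < dgamma x /\ 0 < ddgamma x)
  (He1 : forall x, is_derive eta x (deta x))
  (He2 : forall x, is_derive deta x (ddeta x))
  (Hepos : forall x, 0 < x -> 0 < deta x /\ 0 < ddeta x) x y :
  0 <= x -> x < y ->
  dgamma x * x - gamma x + deta (a * x) * (a * x) - eta (a * x) <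
  dgamma y * y - gamma y + deta (a * y) * (a * y) - eta (a * y).
Proof.
  intros Hx Hxy.
  set (h := fun r => dgamma r * r - gamma r + deta (a * r) * (a * r) - eta (a * r)).
  set (h' := fun r => ddgamma r * r + ddeta (a * r) * a * (a * r)).
  assert (D : forall r, is_derive h r (h' r)).
  { intro r.
    assert (E : exists d, is_derive h r d /\ d = h' r).
    { eexists; split.
      - apply (is_derive_ext (fun t => minus (plus (minus (mult (dgamma t) t) (gamma t)) (mult (deta (a*t)) (a*t))) (eta (a*t)))).
        { intro t. unfold h, minus, plus, mult, opp; simpl. unfold mult; simpl. ring. }
        assert (A1 : is_derive (fun t : R => mult (dgamma t) t) r (plus (mult (ddgamma r) r) (mult (dgamma r) one))).
        { apply (is_derive_mult dgamma (fun t => t)). apply Hg2. apply (@is_derive_id R_AbsRing). intros; apply Rmult_comm. }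
        assert (L : is_derive (fun t : R => a * t) r (a * one)).
        { apply (is_derive_scal (fun t => t)). apply (@is_derive_id R_AbsRing). }
        assert (A2 : is_derive (fun t : R => deta (a * t)) r (scal (a * one) (ddeta (a * r)))).
        { apply (is_derive_comp deta (fun t => a * t)). apply He2. exact L. }
        assert (A3 : is_derive (fun t : R => eta (a * t)) r (scal (a * one) (deta (a * r)))).
        { apply (is_derive_comp eta (fun t => a * t)). apply He1. exact L. }
        assert (A4 : is_derive (fun t : R => mult (deta (a*t)) (a*t)) r
            (plus (mult (scal (a * one) (ddeta (a * r))) (a*r)) (mult (deta (a*r)) (a * one)))).
        { apply (is_derive_mult (fun t => deta (a*t)) (fun t => a * t)). exact A2. exact L. intros; apply Rmult_comm. }
        pose proof (is_derive_minus _ _ _ _ _ (is_derive_plus _ _ _ _ _ (is_derive_minus _ _ _ _ _ A1 (Hg1 r)) A4) A3) as B.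
        exact B.
      - unfold h'. simpl. unfold minus, plus, mult, scal, opp, one; simpl.
        unfold mult; simpl. ring. }
    destruct E as [d [E1 E2]]. rewrite <- E2. exact E1. }
  destruct (MVT_cor2 h h' x y Hxy) as [c [Hc Hc2]].
  { intros c _. apply is_derive_Reals. apply D. }
  assert (0 < h' c).
  { unfold h'. assert (0 < c) by lra.
    destruct (Hgpos c) as [_ G]; [lra|].
    destruct (Hepos (a*c)) as [_ G2]; [apply Rmult_lt_0_compat; lra|].
    assert (0 < ddgamma c * c) by (apply Rmult_lt_0_compat; lra).
    assert (0 < a * c) by (apply Rmult_lt_0_compat; lra).
    assert (0 < ddeta (a * c) * a) by (apply Rmult_lt_0_compat; lra).
    assert (0 < ddeta (a * c) * a * (a * c)) by (apply Rmult_lt_0_compat; lra).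
    lra. }
  change (h x < h y).
  assert (0 < h' c * (y - x)) by (apply Rmult_lt_0_compat; lra). lra.
Qed.

Theorem mainTheorem9
  (s1 s2 s3 chi dbar ir k : R)
  (gamma dgamma ddgamma eta deta ddeta : R -> R)
  (Linv : R -> R) (Ldom : R -> Prop)
  (Hs1 : 0 < s1) (Hs2 : 0 < s2) (Hs3 : 0 < s3) (Hsum : s1 + s2 + s3 = 1)
  (Hchi : 0 < chi < 1) (Hdbar : 0 <= dbar) (Hk : 0 < k)
  (Hg1 : forall x, is_derive gamma x (dgamma x))
  (Hg2 : forall x, is_derive dgamma x (ddgamma x))
  (Hgpos : forall x, 0 < x -> 0 < dgamma x /\ 0 < ddgamma x)
  (Hg0 : gamma 0 = 0) (Hdg0 : dgamma 0 = 0)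
  (He1 : forall x, is_derive eta x (deta x))
  (He2 : forall x, is_derive deta x (ddeta x))
  (Hepos : forall x, 0 < x -> 0 < deta x /\ 0 < ddeta x)
  (He0 : eta 0 = 0) (Hde0 : deta 0 = 0)
  (HLdec : forall x y, Ldom x -> Ldom y -> x < y -> Linv y < Linv x)
  (HLnn : forall x, Ldom x -> 0 <= Linv x) :
  forall (i1 i2 rt1 rt2 id1 id2 : R),
    0 <= i1 -> i1 < i2 ->
    scarce_eq gamma dgamma eta deta k chi ir i1 rt1 id1 ->
    scarce_eq gamma dgamma eta deta k chi ir i2 rt2 id2 ->
    Ldom (loan_rate i1 id1) -> Ldom (loan_rate i2 id2) ->
    agg_reserves Linv s2 s3 chi dbar id2 (loan_rate i2 id2)
      < agg_reserves Linv s2 s3 chi dbar id1 (loan_rate i1 id1).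
Proof.
  intros i1 i2 rt1 rt2 id1 id2 Hi1 Hi12 [Hr1 [En1 [Hid1 De1]]] [Hr2 [En2 [Hid2 De2]]] Hd1 Hd2.
  assert (Ha : 0 < ratio_a chi).
  { unfold ratio_a. apply Rdiv_lt_0_compat; lra. }
  set (a := ratio_a chi) in *.
  unfold entry_eq in En1, En2. fold a in En1, En2.
  assert (Rt : rt1 = rt2).
  { destruct (Rtotal_order rt1 rt2) as [H|[H|H]]; auto.
    - pose proof (h_incr a gamma dgamma ddgamma eta deta ddeta Ha Hg1 Hg2 Hgpos He1 He2 Hepos rt1 rt2 Hr1 H). lra.
    - pose proof (h_incr a gamma dgamma ddgamma eta deta ddeta Ha Hg1 Hg2 Hgpos He1 He2 Hepos rt2 rt1 Hr2 H). lra. }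
  subst rt2.
  unfold deposit_eq in De1, De2. fold a in De1, De2.
  set (q1 := (1 + i1) / (1 + id1)) in *.
  set (q2 := (1 + i2) / (1 + id2)) in *.
  assert (Q1 : q1 * (1 + id1) = 1 + i1) by (unfold q1; field; lra).
  assert (Q2 : q2 * (1 + id2) = 1 + i2) by (unfold q2; field; lra).
  assert (Eq : id2 - id1 = a * (q2 - q1)) by lra.
  assert (Hq1 : 0 < q1) by (unfold q1; apply Rdiv_lt_0_compat; lra).
  assert (Hq2 : 0 < q2) by (unfold q2; apply Rdiv_lt_0_compat; lra).
  assert (Hid : id1 < id2).
  { destruct (Rlt_or_le id1 id2) as [H|H]; auto.
    assert (q2 - q1 <= 0).
    { destruct (Rle_or_lt (q2 - q1) 0) as [H'|H']; auto.
      assert (0 < a * (q2 - q1)) by (apply Rmult_lt_0_compat; lra). lra. }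
    assert (q2 * (1 + id2) <= q1 * (1 + id2)) by (apply Rmult_le_compat_r; lra).
    assert (q1 * (1 + id2) <= q1 * (1 + id1)) by (apply Rmult_le_compat_l; lra).
    lra. }
  assert (Hq : q1 < q2).
  { destruct (Rlt_or_le q1 q2) as [H|H]; auto.
    assert (a * (q2 - q1) <= 0).
    { rewrite <- (Rmult_0_r a). apply Rmult_le_compat_l; lra. }
    lra. }
  assert (HL : Linv (loan_rate i2 id2) < Linv (loan_rate i1 id1)).
  { apply HLdec; auto. unfold loan_rate. fold q1 q2. lra. }
  assert (HL2 := HLnn _ Hd2).
  set (L1 := Linv (loan_rate i1 id1)) in *.
  set (L2 := Linv (loan_rate i2 id2)) in *.
  assert (HD1 : 0 < 1 + id1 * chi) by nra.
  assert (HD12 : 1 + id1 * chi < 1 + id2 * chi) by nra.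
  assert (Hu : / (1 + id2 * chi) < / (1 + id1 * chi)) by (apply Rinv_lt_contravar; nra).
  assert (Hu2 : 0 < / (1 + id2 * chi)) by (apply Rinv_0_lt_compat; lra).
  set (u1 := / (1 + id1 * chi)) in *.
  set (u2 := / (1 + id2 * chi)) in *.
  assert (Hc : 0 < chi) by lra.
  unfold agg_reserves. fold L1 L2. unfold Rdiv. fold u1 u2.
  assert (P1 : 0 < chi * u2) by (apply Rmult_lt_0_compat; lra).
  assert (P2 : chi * u2 < chi * u1) by (apply Rmult_lt_compat_l; lra).
  destruct (Rle_dec L2 dbar) as [A|A]; destruct (Rle_dec L1 dbar) as [B|B].
  - assert (s2 * L2 * (chi * u2) < s2 * L1 * (chi * u1)).
    { assert (s2 * L2 < s2 * L1) by (apply Rmult_lt_compat_l; lra).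
      assert (0 <= s2 * L2) by nra. nra. }
    nra.
  - assert (s2 * L2 * (chi * u2) < ((s2 + s3) * L1 - s3 * dbar) * (chi * u1)).
    { assert (s2 * L2 < (s2 + s3) * L1 - s3 * dbar) by nra.
      assert (0 <= s2 * L2) by nra. nra. }
    nra.
  - lra.
  - assert (((s2 + s3) * L2 - s3 * dbar) * (chi * u2) < ((s2 + s3) * L1 - s3 * dbar) * (chi * u1)).
    { assert ((s2 + s3) * L2 - s3 * dbar < (s2 + s3) * L1 - s3 * dbar) by nra.
      assert (0 <= (s2 + s3) * L2 - s3 * dbar) by nra. nra. }
    nra.
Qed.
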